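(* Let $\ell$ and $m$ be positive integers with $2\le \ell\le m$, let $G$ be a torsion-free abelian group written multiplicatively, and let $\mathcal{A}=(A_1,\dots,A_m)$ be a sequence of nonempty finite subsets of $G$. Put $A=A_1\cup\cdots\cup A_m$. Then \[ |\Pi^{\ell}(\mathcal{A})| \ \ge\ \sum_{a\in A}\mu_{\mathcal{A}}(a)-\ell+1, \] and this lower bound is best possible (there exist such sequences for which equality holds).
   Context: For $S\subseteq G$, $\chi_S$ is the indicator function of $S$. For $a\in A$, $\mu_{\mathcal{A}}(a)=\min\big(\ell,\sum_{j=1}^m\chi_{A_j}(a)\big)$. $\Pi^{\ell}(\mathcal{A})$ is the set of all products $a_{i_1}\cdots a_{i_\ell}$ with $i_1,\dots,i_\ell\in[1,m]$ pairwise distinct and $a_{i_j}\in A_{i_j}$ (since $G$ is abelian, the order is irrelevant). $[x,y]=\{n\in\mathbb{Z}:x\le n\le y\}$. *)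

(* Defs.v *)
(* mathcomp + finmap.  The group G is written additively as a
   zmodType (abelian group); the paper writes it multiplicatively, so products
   a_{i_1}...a_{i_l} become sums. *)
From HB Require Import structures.
From mathcomp Require Import all_boot all_order all_algebra.
From mathcomp Require Export finmap.
Set Implicit Arguments. Unset Strict Implicit. Unset Printing Implicit Defensive.
Import GRing.Theory.
Local Open Scope ring_scope.
Local Open Scope fset_scope.

Definition torsion_free (G : zmodType) : Prop :=
  forall (x : G) (n : nat), x *+ n.+1 = 0 -> x = 0.

Definition union_fam (G : zmodType) (m : nat) (A : 'I_m -> {fset G}) : {fset G} :=
  \big[fsetU/fset0]_(j < m) A j.

Definition mu (G : zmodType) (l m : nat) (A : 'I_m -> {fset G}) (a : G) : nat :=
  minn l (\sum_(j < m) (a \in A j)).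

(* Pi^l(A): all "products" (here sums) a_{i_1} + ... + a_{i_l} with
   i_1,...,i_l pairwise distinct indices in [1,m] and a_{i_k} in A_{i_k}.
   An element is encoded by an injective index map i : 'I_l -> 'I_m together
   with a choice a : 'I_l -> (union of the A_j) such that a k \in A (i k). *)
Definition Pi_index (G : zmodType) (l m : nat) (A : 'I_m -> {fset G}) :=
  ({ffun 'I_l -> 'I_m} * {ffun 'I_l -> union_fam A})%type.

Definition Pi_ok (G : zmodType) (l m : nat) (A : 'I_m -> {fset G})
  (p : Pi_index l A) : bool :=
  injectiveb p.1 && [forall k, val (p.2 k) \in A (p.1 k)].

Definition Pi_val (G : zmodType) (l m : nat) (A : 'I_m -> {fset G})
  (p : Pi_index l A) : G := \sum_(k < l) val (p.2 k).

Definition Pi (G : zmodType) (l m : nat) (A : 'I_m -> {fset G}) : {fset G} :=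
  [fset Pi_val p | p in enum (@Pi_ok G l m A)].

(* Main.v *)
Require Import Defs.
From HB Require Import structures.
From mathcomp Require Import all_boot all_order all_algebra finmap.
Local Open Scope ring_scope.
From mathcomp Require Import zify ring.
From Stdlib Require Import Classical.
Set Implicit Arguments. Unset Strict Implicit. Unset Printing Implicit Defensive.
Import Order.TTheory GRing.Theory Num.Theory.
Section Core.
Variables (G : zmodType) (l m : nat).
Local Open Scope fset_scope.

Lemma mem_union (A : 'I_m -> {fset G}) j x : x \in A j -> x \in union_fam A.
Proof. by move=> h; apply/bigfcupP; exists j => //; rewrite mem_index_enum. Qed.

Lemma memPi (A : 'I_m -> {fset G}) s :
  reflect (exists i : 'I_l -> 'I_m, exists a : 'I_l -> G,
     [/\ injective i, (forall k, a k \in A (i k)) & s = \sum_k a k])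
   (s \in Pi l A).
Proof.
apply: (iffP idP).
  case/imfsetP => /= p; rewrite mem_enum => /andP[/injectiveP inj /forallP ok] ->.
  by exists p.1, (fun k => val (p.2 k)); split.
case=> i [a [inj ok ->]].
have H k : a k \in union_fam A by apply: (mem_union (ok k)).
apply/imfsetP; exists ([ffun k => i k], [ffun k => [` H k]]).
  rewrite mem_enum /Pi_ok /=; apply/andP; split.
    by apply/injectiveP => x y; rewrite !ffunE; apply: inj.
  by apply/forallP => k; rewrite !ffunE /=.
by rewrite /Pi_val; apply: eq_bigr => k _; rewrite ffunE.
Qed.

Lemma sum_bool_card (T : finType) (P : pred T) : (\sum_(j : T) (P j : nat))%N = #|P|.
Proof.
rewrite -sum1_card [RHS]big_mkcond /=; apply: eq_bigr => j _.
have -> : (j \in P) = P j by []. by case: (P j).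
Qed.

Lemma fset_ne0 (B C : {fset G}) : B `<=` C -> B != fset0 -> C != fset0.
Proof.
move=> /fsubsetP sub /fset0Pn [x hx]; apply/fset0Pn; exists x; exact: sub.
Qed.

Lemma ffirst (B : {fset G}) : B != fset0 -> exists x, x \in B.
Proof. by move/fset0Pn. Qed.

Definition cnt (A : 'I_m -> {fset G}) a := (\sum_(j < m) (a \in A j))%N.
Definition Nne (A : 'I_m -> {fset G}) := #|[set j | A j != fset0]|.
Definition sz (A : 'I_m -> {fset G}) := (\sum_(j < m) #|` A j|)%N.
Definition rmv (A : 'I_m -> {fset G}) j y : 'I_m -> {fset G} :=
  fun i => if i == j then A j `\ y else A i.

Lemma Nne_sum (A : 'I_m -> {fset G}) : Nne A = (\sum_(j < m) (A j != fset0))%N.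
Proof. by rewrite /Nne (sum_bool_card (fun j => A j != fset0)); apply: eq_card => i; rewrite inE. Qed.

Lemma nonempty_Pi (A : 'I_m -> {fset G}) : (l <= Nne A)%N ->
  exists i : 'I_l -> 'I_m, exists a : 'I_l -> G,
     injective i /\ (forall k, a k \in A (i k)).
Proof.
move=> H.
pose i k := enum_val (widen_ord H k).
have inj : injective i.
  by move=> x y /enum_val_inj /(congr1 val) /= /val_inj.
have ne k : A (i k) != fset0.
  by have := enum_valP (widen_ord H k); rewrite inE.
have [a ha] := fin_all_exists (fun k => ffirst (ne k)).
by exists i, a.
Qed.


Variables (U : {fset G}) (psi : G -> rat).
Hypothesis Hinj : {in U &, injective psi}.
Hypothesis Hadd : forall a b : 'I_l -> G, (forall k, a k \in U) -> (forall k, b k \in U) ->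
  \sum_k a k = \sum_k b k -> \sum_k psi (a k) = \sum_k psi (b k).

Definition Sm (A : 'I_m -> {fset G}) := (\sum_(a <- U) mu l A a)%N.

Section Step.
Variables (A : 'I_m -> {fset G}) (j : 'I_m) (y : G).
Hypothesis AU : forall i, A i `<=` U.
Hypothesis yA : y \in A j.
Hypothesis ymax : forall z, z \in A j -> psi z <= psi y.
Let A' := rmv A j y.

Lemma rmv_sub i : A' i `<=` A i.
Proof.
rewrite /A' /rmv; case: eqP => [->|_] //; exact: fsubsetDl.
Qed.

Lemma rmvU i : A' i `<=` U.
Proof. exact: fsubset_trans (rmv_sub i) (AU i). Qed.

Lemma yU : y \in U.
Proof. exact: (fsubsetP (AU j)). Qed.

Lemma sz_rmv : sz A = (sz A').+1.
Proof.
rewrite /sz (bigD1 j) //= [in RHS](bigD1 j) //= (cardfsD1 y (A j)) yA /A' /rmv eqxx.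
congr (_ + _)%N; apply: eq_bigr => i /negPf ->; done.
Qed.

Lemma cnt_rmv_y : cnt A y = (cnt A' y).+1.
Proof.
rewrite /cnt (bigD1 j) //= [in RHS](bigD1 j) //= yA /A' /rmv eqxx in_fsetD1 eqxx /=.
congr (_ + _)%N; apply: eq_bigr => i /negPf ->; done.
Qed.

Lemma cnt_rmv_other a : a != y -> cnt A' a = cnt A a.
Proof.
move=> ay; rewrite /cnt; apply: eq_bigr => i _; rewrite /A' /rmv.
case: eqP => [->|_] //; by rewrite in_fsetD1 ay.
Qed.

Lemma Sm_rmv : (Sm A <= Sm A' + (cnt A y <= l))%N.
Proof.
rewrite /Sm (bigD1_seq y yU (fset_uniq U)) (bigD1_seq y yU (fset_uniq U)) /=.
have -> : (\sum_(i <- U | i != y) mu l A' i = \sum_(i <- U | i != y) mu l A i)%N.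
  by apply: eq_bigr => a ay; rewrite /mu -!/(cnt _ _) cnt_rmv_other.
rewrite /mu -!/(cnt _ _) cnt_rmv_y.
set c := cnt A' y; set S := (\sum_(_ <- _ | _) _)%N.
have key : (minn l c.+1 <= minn l c + (c.+1 <= l))%N.
  rewrite /minn; case: (ltnP l c.+1) => h1; case: (ltnP l c) => h2; case: (leqP c.+1 l) => h3 //=; lia.
lia.
Qed.

Lemma Nne_rmv : (Nne A' <= Nne A)%N.
Proof.
apply: subset_leq_card; apply/subsetP => i; rewrite !inE; apply: fset_ne0; exact: rmv_sub.
Qed.

Lemma Pi_rmv : Pi l A' `<=` Pi l A.
Proof.
apply/fsubsetP => s /memPi [i [a [inj ok ->]]]; apply/memPi; exists i, a; split => //.
move=> k; exact: (fsubsetP (rmv_sub (i k))).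
Qed.


Lemma improve_gen (i : 'I_l -> 'I_m) (a : 'I_l -> G) k0 :
  injective i -> (forall k, a k \in A' (i k)) -> (forall k, k != k0 -> i k != j) ->
  psi (a k0) < psi y ->
  exists i' : 'I_l -> 'I_m, exists a' : 'I_l -> G,
    [/\ injective i', (forall k, a' k \in A (i' k)) & \sum_k psi (a k) < \sum_k psi (a' k)].
Proof.
move=> inj ok nj lt.
exists (fun k => if k == k0 then j else i k), (fun k => if k == k0 then y else a k); split.
- move=> x z /=; case: (eqVneq x k0) => [->|xk]; case: (eqVneq z k0) => [->|zk] //.
  + by move=> e; have := nj z zk; rewrite -e eqxx.
  + by move=> e; have := nj x xk; rewrite e eqxx.
  + exact: inj.
- move=> k; case: (eqVneq k k0) => // _; exact: (fsubsetP (rmv_sub (i k))).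
- rewrite (bigD1 k0) //= [X in _ < X](bigD1 k0) //= eqxx.
  have -> : \sum_(k | k != k0) psi (if k == k0 then y else a k) = \sum_(k | k != k0) psi (a k).
    by apply: eq_bigr => k /negPf ->.
  by rewrite ltrD2r.
Qed.

Definition Hcase := (forall i z, z \in A i -> psi z <= psi y) \/ ((Nne A <= l)%N /\ A' j != fset0).

Lemma improve (i : 'I_l -> 'I_m) (a : 'I_l -> G) :
  (cnt A y <= l)%N -> Hcase ->
  injective i -> (forall k, a k \in A' (i k)) ->
  exists i' : 'I_l -> 'I_m, exists a' : 'I_l -> G,
    [/\ injective i', (forall k, a' k \in A (i' k)) & \sum_k psi (a k) < \sum_k psi (a' k)].
Proof.
move=> hc hcase inj ok.
have ltof z i0 : z \in A i0 -> z != y -> psi z <= psi y -> psi z < psi y.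
  move=> zA zy le; rewrite lt_neqAle le andbT; apply: contra zy => /eqP e.
  apply/eqP; apply: Hinj => //; [exact: (fsubsetP (AU i0)) | exact: yU].
case: (pickP (fun k => i k == j)) => [k0 /eqP ik0 | none].
  apply: (improve_gen (k0:=k0) inj ok).
    move=> k kk0; apply/eqP => ikj; move/eqP: kk0; apply; apply: inj; by rewrite ikj ik0.
  have := ok k0; rewrite ik0 /A' /rmv eqxx in_fsetD1 => /andP[ay aj].
  by apply: (ltof _ j) => //; apply: ymax.
case: hcase => [glob | [hN hj]].
  case: (pickP (fun k => a k != y)) => [k0 hk0 | ally].
    apply: (improve_gen (k0:=k0) inj ok); first by move=> k _; rewrite none.
    have aA : a k0 \in A (i k0) by exact: (fsubsetP (rmv_sub (i k0))).
    by apply: (ltof _ (i k0)) => //; apply: glob aA.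
  exfalso.
  have : (l <= cnt A' y)%N.
    rewrite /cnt (sum_bool_card (fun i0 => y \in A' i0)).
    rewrite -[X in (X <= _)%N](card_ord l) -(card_imset (mem 'I_l) inj).
    apply: subset_leq_card; apply/subsetP => x /imsetP [k _ ->].
    by change (y \in A' (i k)); move/negbFE/eqP: (ally k) => <-; exact: ok.
  by move: hc; rewrite cnt_rmv_y; lia.
exfalso.
have : (l.+1 <= Nne A')%N.
  have -> : l.+1 = #|j |: [set i k | k in 'I_l]|.
    rewrite cardsU1 (card_imset _ inj) card_ord.
    have -> : j \notin [set i k | k in 'I_l].
      by apply/imsetP => -[k _ e]; have := none k; rewrite -e eqxx.
    by [].
  apply: subset_leq_card; apply/subsetP => x; rewrite !inE => /orP[/eqP -> // | /imsetP [k _ ->]].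
  by apply/fset0Pn; exists (a k).
by have := Nne_rmv; lia.
Qed.

Definition TT := ({ffun 'I_l -> 'I_m} * {ffun 'I_l -> U})%type.
Definition okT (B : 'I_m -> {fset G}) (p : TT) :=
  injectiveb p.1 && [forall k, val (p.2 k) \in B (p.1 k)].
Definition score (p : TT) := \sum_k psi (val (p.2 k)).

Lemma toT (B : 'I_m -> {fset G}) (i : 'I_l -> 'I_m) (a : 'I_l -> G) :
  (forall i0, B i0 `<=` U) -> injective i -> (forall k, a k \in B (i k)) ->
  exists p : TT, [/\ okT B p, score p = \sum_k psi (a k) & \sum_k val (p.2 k) = \sum_k a k].
Proof.
move=> BU inj ok.
have aU k : a k \in U by exact: (fsubsetP (BU (i k))).
exists ([ffun k => i k], [ffun k => [` aU k]]); split.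
- apply/andP; split; first by apply/injectiveP => x z; rewrite !ffunE; apply: inj.
  by apply/forallP => k; rewrite !ffunE /=.
- by apply: eq_bigr => k _; rewrite ffunE.
- by apply: eq_bigr => k _; rewrite ffunE.
Qed.

Lemma card_step : (l <= Nne A')%N -> (cnt A y <= l)%N -> Hcase ->
  (#|` Pi l A'| < #|` Pi l A|)%N.
Proof.
move=> hN hc hcase; apply: fproper_ltn_card; rewrite fproperE Pi_rmv /=.
have [i0 [a0 [inj0 ok0]]] := nonempty_Pi (leq_trans hN Nne_rmv).
have [p0 [okp0 _ _]] := toT AU inj0 ok0.
case: (@Order.TotalTheory.arg_maxP _ _ _ p0 (okT A) score okp0) => pst okst maxst.
move: okst => /andP[/injectiveP injst /forallP okst].
apply/negP => /fsubsetP sub.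
have sA : \sum_k val (pst.2 k) \in Pi l A.
  by apply/memPi; exists pst.1, (fun k => val (pst.2 k)); split.
have /memPi [i [a [inj ok e]]] := sub _ sA.
have [i' [a' [inj' ok' lt]]] := improve hc hcase inj ok.
have [q [okq sq _]] := toT AU inj' ok'.
have := maxst q okq; rewrite sq.
have -> : score pst = \sum_k psi (a k).
  apply: Hadd => //; first by move=> k; exact: fsvalP.
  by move=> k; exact: (fsubsetP (rmvU (i k))).
by move=> le; have := lt_le_trans lt le; rewrite ltxx.
Qed.


Lemma step_ok : (Sm A' + 1 <= #|` Pi l A'| + l)%N -> (l <= Nne A')%N -> Hcase ->
  (Sm A + 1 <= #|` Pi l A| + l)%N.
Proof.
move=> IH hN hcase; have := Sm_rmv.
case: (leqP (cnt A y) l) => hc /=.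
  have := card_step hN hc hcase; move: IH; set a := Sm A'; set b := #|` Pi l A'|; set c := #|` Pi l A|; set d := Sm A. lia.
have := fsubset_leq_card Pi_rmv; move: IH; set a := Sm A'; set b := #|` Pi l A'|; set c := #|` Pi l A|; set d := Sm A; lia.
Qed.

End Step.

Lemma fset_max (B : {fset G}) : B != fset0 ->
  exists2 y, y \in B & forall z, z \in B -> psi z <= psi y.
Proof.
case/fset0Pn => z hz.
pose x0 : B := [` hz].
case: (@Order.TotalTheory.arg_maxP _ _ _ x0 xpredT (fun t : B => psi (val t)) isT) => t _ mx.
exists (val t); first exact: fsvalP.
by move=> w hw; have := mx [` hw] isT.
Qed.

Lemma base (A : 'I_m -> {fset G}) : (forall i, A i `<=` U) ->
  (forall i, #|` A i| <= 1)%N -> (l <= Nne A)%N -> (Nne A <= l)%N ->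
  (Sm A + 1 <= #|` Pi l A| + l)%N.
Proof.
move=> AU h1 hN hN'.
have S1 : (Sm A <= Nne A)%N.
  apply: (@leq_trans (\sum_(a <- U) cnt A a)).
    by apply: leq_sum => a _; rewrite /mu -/(cnt _ _) geq_minr.
  rewrite /cnt exchange_big Nne_sum leq_eqVlt; apply/orP; left.
  apply/eqP; apply: eq_bigr => i _.
  rewrite -(big_fset_incl _ (AU i)); last by move=> x _ /negPf ->.
  rewrite (eq_big_seq (fun _ => 1%N)); last by move=> x ->.
  rewrite sum1_size -cardfs_gt0; have := h1 i; rewrite -/(#|` A i|).
  by case: #|` A i| => [|[|]].
have P1 : (0 < #|` Pi l A|)%N.
  have [i [a [inj ok]]] := nonempty_Pi hN.
  by rewrite cardfs_gt0; apply/fset0Pn; exists (\sum_k a k); apply/memPi; exists i, a.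
lia.
Qed.

Lemma core n : forall A : 'I_m -> {fset G}, (sz A <= n)%N -> (forall i, A i `<=` U) ->
  (l <= Nne A)%N -> (Sm A + 1 <= #|` Pi l A| + l)%N.
Proof.
elim: n => [|n IH] A hs AU hN.
  apply: base => //.
    move=> i; have : (#|` A i| <= sz A)%N by rewrite /sz (bigD1 i) //= leq_addr.
    by lia.
  apply: (@leq_trans (sz A)); last by lia.
  rewrite Nne_sum.
  by apply: leq_sum => i _; rewrite -cardfs_gt0; case: #|` A i|.
case: (ltnP l (Nne A)) => hl.
  have [j0] : exists j0, A j0 != fset0.
    have : (0 < Nne A)%N by lia.
    by rewrite /Nne card_gt0 => /set0Pn [j0]; rewrite inE; exists j0.
  case/fset0Pn => z hz.
  have [x xU xmax] : exists2 x, x \in union_fam A & forall z, z \in union_fam A -> psi z <= psi x.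
    by apply: fset_max; apply/fset0Pn; exists z; exact: mem_union hz.
  have [j _ xA] := bigfcupP _ _ _ _ xU.
  have hN' : (l <= Nne (rmv A j x))%N.
    have : (Nne A <= (Nne (rmv A j x)).+1)%N.
      rewrite /Nne; apply: (@leq_trans #|j |: [set i | rmv A j x i != fset0]|).
        apply: subset_leq_card; apply/subsetP => i; rewrite !inE /rmv.
        by case: (eqVneq i j) => //= _ ->; rewrite orbT.
      by rewrite cardsU1; case: (_ \notin _).
    by lia.
  apply: (step_ok AU xA (fun w hw => xmax w (mem_union hw))) => //.
  - apply: IH => //; last by move=> i; exact: (rmvU _ _ AU).
    by have := sz_rmv xA; move: hs; set s1 := sz A; set s2 := sz _; lia.
  - by left => i w hw; apply: xmax; exact: mem_union hw.
case: (pickP (fun i => 1 < #|` A i|)%N) => [j hj | none]; last first.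
  by apply: base => // i; have := none i; rewrite /= ltnNge => /negbFE.
have [y yA ymax] : exists2 y, y \in A j & forall z, z \in A j -> psi z <= psi y.
  by apply: fset_max; rewrite -cardfs_gt0; lia.
have hj' : rmv A j y j != fset0.
  rewrite /rmv eqxx -cardfs_gt0; move: hj; rewrite (cardfsD1 y) yA; lia.
have hN' : (l <= Nne (rmv A j y))%N.
  apply: (leq_trans hN); apply: subset_leq_card; apply/subsetP => i; rewrite !inE.
  case: (eqVneq i j) => [-> _ | ij] //; by rewrite /rmv (negPf ij).
apply: (step_ok AU yA ymax) => //.
- apply: IH => //; last by move=> i; exact: (rmvU _ _ AU).
  by have := sz_rmv yA; move: hs; set s1 := sz A; set s2 := sz _; lia.
- by right; split.
Qed.

End Core.
Section LA.
Variables (G : zmodType) (HG : torsion_free G) (n : nat) (u : 'I_n -> G).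
Hypothesis uinj : injective u.

Definition Lrel (c : 'rV[int]_n) : bool := \sum_i u i *~ c 0 i == 0.
Definition Mq (N : nat) (M : 'M[int]_(N, n)) : 'M[rat]_(N, n) := map_mx intr M.

Lemma col_sub_r N1 N2 (A : 'M[rat]_(N1, n)) (B : 'M[rat]_(N2, n)) : (B <= col_mx A B)%MS.
Proof. by have := submx_refl (col_mx A B); rewrite col_mx_sub => /andP[]. Qed.
Lemma col_sub_l N1 N2 (A : 'M[rat]_(N1, n)) (B : 'M[rat]_(N2, n)) : (A <= col_mx A B)%MS.
Proof. by have := submx_refl (col_mx A B); rewrite col_mx_sub => /andP[]. Qed.

Lemma span_k k : exists N, exists M : 'M[int]_(N, n),
  (forall t, Lrel (row t M)) /\
  ((k <= \rank (Mq M))%N \/ forall c, Lrel c -> (Mq c <= Mq M)%MS).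
Proof.
elim: k => [|k [N [M [rows H]]]].
  by exists 0%N, 0; split; [case | left].
case: H => [hk | hall]; last by exists N, M; split => //; right.
case: (classic (forall c, Lrel c -> (Mq c <= Mq M)%MS)) => [hall | ].
  by exists N, M; split => //; right.
move=> hn; have [c hc] := not_all_ex_not _ _ hn; have [Lc nc] := Classical_Prop.imply_to_and _ _ hc.
exists (1 + N)%N, (col_mx c M); split.
  move=> t; rewrite /Lrel -(splitK t); case: (split t) => t' /=.
    rewrite (ord1 t'); move: Lc; rewrite /Lrel.
    by under eq_bigr => i _ do rewrite mxE col_mxEu.
  under eq_bigr => i _ do rewrite mxE col_mxEd.
  suff -> : \sum_i u i *~ M t' i = \sum_i u i *~ row t' M 0 i by exact: rows t'.
  by apply: eq_bigr => i _; rewrite mxE.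
left.
have : (Mq M < Mq (col_mx c M))%MS.
  rewrite /Mq map_col_mx ltmxE col_sub_r /=; apply/negP => h; apply: nc.
  exact: submx_trans (col_sub_l _ _) h.
rewrite ltmxErank => /andP[_ lt]; exact: leq_ltn_trans hk lt.
Qed.

Lemma span_ex : exists N, exists M : 'M[int]_(N, n),
  (forall t, Lrel (row t M)) /\ forall c, Lrel c -> (Mq c <= Mq M)%MS.
Proof.
have [N [M [rows [hk | hall]]]] := span_k n.+1; last by exists N, M.
by have := rank_leq_col (Mq M); lia.
Qed.


Definition drow (i j : 'I_n) : 'rV[int]_n := \row_k ((k == i)%:R - (k == j)%:R).

Lemma sum_delta (i : 'I_n) : \sum_k u k *~ (k == i)%:R = u i.
Proof.
rewrite (bigD1 i) //= eqxx big1 ?addr0 //; last by move=> k /negPf ->; rewrite mulr0z.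
Qed.

Lemma sep N (M : 'M[int]_(N, n)) (rows : forall t, Lrel (row t M)) (i j : 'I_n) :
  i != j -> ~~ (Mq (drow i j) <= Mq M)%MS.
Proof.
move=> ij; apply/negP => /submxP [x e].
pose r t := x 0 t.
pose K : int := \prod_t denq (r t).
pose z t : int := numq (r t) * \prod_(t' | t' != t) denq (r t').
have hz t : (z t)%:~R = K%:~R * r t.
  rewrite /z /K [in RHS](bigD1 t) //= !intrM numqE; ring.
have hK i' : K * drow i j 0 i' = \sum_t z t * M t i'.
  apply: (@intr_inj rat); rewrite intrM rmorph_sum /=.
  move/matrixP: e => /(_ 0 i'); rewrite /Mq !mxE /= => ->.
  rewrite mulr_sumr; apply: eq_bigr => t _; rewrite intrM hz mxE /r; ring.
have s0 : \sum_i' u i' *~ (K * drow i j 0 i') = 0.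
  under eq_bigr => i' _ do rewrite hK mulrz_sumr.
  rewrite exchange_big /=; apply: big1 => t _.
  under eq_bigr => i' _ do rewrite mulrC mulrzA.
  rewrite -mulrz_suml.
  have := rows t; rewrite /Lrel => /eqP.
  under eq_bigr => i' _ do rewrite mxE.
  by move=> ->; rewrite mul0rz.
have s1 : (u i - u j) *~ K = 0.
  rewrite -s0.
  have -> : u i - u j = \sum_i' u i' *~ drow i j 0 i'.
    under eq_bigr => i' _ do rewrite mxE mulrzBr.
    by rewrite sumrB !sum_delta.
  rewrite mulrz_suml; apply: eq_bigr => i' _; by rewrite mulrC mulrzA.
have Kpos : 0 < K by rewrite /K; apply: prodr_gt0 => t _; exact: denq_gt0.
have fin : forall K0 : int, 0 < K0 -> (u i - u j) *~ K0 = 0 -> False.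
  case => [[|k]|k] //= _ s.
  have := HG s; move/eqP; rewrite subr_eq0 => /eqP /uinj e'.
  by move: ij; rewrite e' eqxx.
exact: fin _ Kpos s1.
Qed.


Definition W (w : 'I_n -> rat) := forall c, Lrel c -> \sum_i (c 0 i)%:~R * w i = 0.

Lemma sum_delta_r (f : 'I_n -> rat) i : \sum_a ((a == i)%:R : int)%:~R * f a = f i.
Proof.
rewrite (bigD1 i) //= eqxx big1 ?addr0; first by rewrite mulr1z mul1r.
by move=> k /negPf ->; rewrite mulr0z mul0r.
Qed.

Lemma sep_w (i j : 'I_n) : i != j -> exists w, W w /\ w i != w j.
Proof.
move=> ij; have [N [M [rows hall]]] := span_ex.
have := sep rows ij; rewrite submxE; set C := cokermx (Mq M) => ns.
have [k hk] : exists k, (Mq (drow i j) *m C) 0 k != 0.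
  apply/existsP; apply: contraNT ns; rewrite negb_exists => /forallP h.
  apply/eqP/matrixP => a b; rewrite (ord1 a) [RHS]mxE; exact/eqP/negbNE/h.
exists (fun a => C a k); split.
  move=> c /hall; rewrite submxE => /eqP /matrixP /(_ 0 k); rewrite !mxE => h.
  apply: etrans _ h; apply: eq_bigr => a _; congr (_ * _); by rewrite /Mq mxE.
move: hk; rewrite mxE /Mq.
under eq_bigr => a _ do rewrite [map_mx _ _ _ _]mxE /drow [(\row__ _) _ _]mxE intrB mulrBl.
by rewrite sumrB !sum_delta_r subr_eq0.
Qed.

Lemma le_sum_abs (f : rat * rat -> rat) (s : seq (rat * rat)) p :
  p \in s -> `|f p| <= \sum_(q <- s) `|f q|.
Proof.
elim: s => // q s IH; rewrite in_cons big_cons => /orP [/eqP -> | h].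
  by rewrite lerDl sumr_ge0.
by apply: ler_wpDl => //; exact: IH.
Qed.

Lemma avoid (s : seq (rat * rat)) : (forall p, p \in s -> p.1 != 0 \/ p.2 != 0) ->
  exists t : rat, forall p, p \in s -> p.1 + t * p.2 != 0.
Proof.
move=> hs.
pose root (p : rat * rat) := if p.2 == 0 then 0 else - p.1 / p.2.
exists (1 + \sum_(q <- s) `|root q|) => p ps.
have le := le_sum_abs root ps.
case: (eqVneq p.2 0) => [e2 | n2].
  rewrite e2 mulr0 addr0; case: (hs p ps) => //; by rewrite e2 eqxx.
apply/negP => /eqP e.
have er : root p = 1 + \sum_(q <- s) `|root q|.
  have e' : (1 + \sum_(q <- s) `|root q|) * p.2 = - p.1.
    by apply/eqP; rewrite -addr_eq0 addrC; apply/eqP.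
  by rewrite /root (negPf n2) -e' mulfK.
have : `|root p| < 1 + \sum_(q <- s) `|root q| by apply: (le_lt_trans le); rewrite ltrDr.
by rewrite er ger0_norm ?ltxx // addr_ge0 // sumr_ge0.
Qed.

Lemma W0 : W (fun _ => 0).
Proof. by move=> c _; rewrite big1 // => i _; rewrite mulr0. Qed.

Lemma WD w1 w2 t : W w1 -> W w2 -> W (fun a => w1 a + t * w2 a).
Proof.
move=> h1 h2 c Lc; under eq_bigr => i _ do rewrite mulrDr mulrCA.
by rewrite big_split /= h1 // -mulr_sumr h2 // mulr0 addr0.
Qed.

Lemma combine (P : seq ('I_n * 'I_n)) : (forall p, p \in P -> p.1 != p.2) ->
  exists w, W w /\ forall p, p \in P -> w p.1 != w p.2.
Proof.
elim: P => [|p P IH] hP.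
  by exists (fun _ => 0); split => //; exact: W0.
have [w [Ww hw]] := IH (fun q qP => hP q (introT orP (or_intror qP))).
have [w' [Ww' hw']] := sep_w (hP p (mem_head _ _)).
have hs : forall x, x \in [seq (w q.1 - w q.2, w' q.1 - w' q.2) | q <- p :: P] -> x.1 != 0 \/ x.2 != 0.
  move=> x /mapP [q qin ->] /=; move: qin; rewrite in_cons => /orP [/eqP -> | qP].
    by right; rewrite subr_eq0.
  by left; rewrite subr_eq0; exact: hw.
have [t ht] := avoid hs.
exists (fun a => w a + t * w' a); split; first exact: WD.
move=> q qin; have := ht _ (map_f (fun q => (w q.1 - w q.2, w' q.1 - w' q.2)) qin).
rewrite /=; apply: contra => /eqP e; apply/eqP.
have h0 : w q.1 + t * w' q.1 - (w q.2 + t * w' q.2) = 0 by rewrite e subrr.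
by rewrite -h0; ring.
Qed.

Lemma LA_main : exists w : 'I_n -> rat, injective w /\ W w.
Proof.
pose P := [seq p <- enum (predT : pred ('I_n * 'I_n)) | p.1 != p.2].
have hP : forall p, p \in P -> p.1 != p.2 by move=> p; rewrite mem_filter => /andP[].
have [w [Ww hw]] := combine hP.
exists w; split => // x y e; apply/eqP; apply: contraT => xy.
have := hw (x, y); rewrite mem_filter xy mem_enum /= e eqxx => /(_ isT); done.
Qed.

End LA.

Lemma fib (V : zmodType) l n (al : 'I_l -> 'I_n) (f : 'I_n -> V) :
  \sum_k f (al k) = \sum_i f i *+ #|[pred k | al k == i]|.
Proof.
rewrite (partition_big al xpredT) //=; apply: eq_bigr => i _.
rewrite -sumr_const; apply: eq_big => k; first by rewrite !inE.
by move=> /eqP ->.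
Qed.

Lemma psi_ex (G : zmodType) (HG : torsion_free G) (U : {fset G}) :
  exists psi : G -> rat, {in U &, injective psi} /\
  forall l (a b : 'I_l -> G), (forall k, a k \in U) -> (forall k, b k \in U) ->
    \sum_k a k = \sum_k b k -> \sum_k psi (a k) = \sum_k psi (b k).
Proof.
pose s : seq G := U.
pose n := size s.
pose u (i : 'I_n) := nth 0 s i.
have us : uniq s := fset_uniq U.
have uinj : injective u.
  move=> i j /eqP; rewrite /u nth_uniq // => /eqP; exact: val_inj.
have [w [winj Ww]] := LA_main HG uinj.
have repr x : x \in U -> exists i, u i = x.
  move=> xU; have xs : x \in s by [].
  have hi : (index x s < n)%N by rewrite index_mem.
  by exists (Ordinal hi); rewrite /u nth_index.
pose psi (g : G) := \sum_(i < n) (u i == g)%:R * w i.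
have psiu j : psi (u j) = w j.
  rewrite /psi (bigD1 j) //= eqxx mul1r big1 ?addr0 // => i ij.
  by rewrite (inj_eq uinj) (negPf ij) mul0r.
exists psi; split.
  move=> x y /repr [i <-] /repr [j <-]; rewrite !psiu => /winj ->; done.
move=> l a b aU bU e.
have [al hal] := fin_all_exists (fun k => repr _ (aU k)).
have [be hbe] := fin_all_exists (fun k => repr _ (bU k)).
pose c : 'rV[int]_n := \row_i (#|[pred k | al k == i]|%:Z - #|[pred k | be k == i]|%:Z).
have Lc : Lrel u c.
  rewrite /Lrel; under eq_bigr => i _ do rewrite mxE mulrzBl_nat -!pmulrn.
  rewrite sumrB -!fib subr_eq0; apply/eqP.
  by rewrite (eq_bigr _ (fun k _ => hal k)) (eq_bigr _ (fun k _ => hbe k)).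
have := Ww c Lc.
under eq_bigr => i _ do rewrite mxE intrB mulrBl -!pmulrn !mulr_natl.
rewrite sumrB -!fib => /eqP; rewrite subr_eq0 => /eqP.
move=> h; rewrite -(eq_bigr _ (fun k _ => congr1 psi (hal k))) -(eq_bigr _ (fun k _ => congr1 psi (hbe k))).
by under eq_bigr => k _ do rewrite psiu; under [in RHS]eq_bigr => k _ do rewrite psiu.
Qed.

Unset Implicit Arguments.

Theorem corollary1p6 (l m : nat) (Hl : (2 <= l)%N) (Hlm : (l <= m)%N)
  (G : zmodType) (HG : torsion_free G) :
  (forall A : 'I_m -> {fset G}, (forall j, A j != fset0) ->
     ((\sum_(a <- union_fam A) mu l A a)%N%:Z - l%:Z + 1 <= (#|` Pi l A|)%:Z)%R)
  /\
  (exists A : 'I_m -> {fset G}, (forall j, A j != fset0) /\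
     (#|` Pi l A|)%:Z = (\sum_(a <- union_fam A) mu l A a)%N%:Z - l%:Z + 1).
Proof.
split.
  move=> A ne.
  have [psi [inj add]] := psi_ex HG (union_fam A).
  have AU i : (A i `<=` union_fam A)%fset by apply: bigfcup_sup; rewrite ?mem_index_enum.
  have hN : (l <= Nne A)%N.
    rewrite /Nne (_ : [set j | A j != fset0] = setT) ?cardsT ?card_ord //.
    by apply/setP => j; rewrite !inE ne.
  have := core inj (add l) (leqnn (sz A)) AU hN.
  rewrite /Sm; set S := (\sum_(a <- _) _)%N; set P := #|` _|; lia.
pose A : 'I_m -> {fset G} := fun _ => [fset (0 : G)]%fset.
have j0 : 'I_m by exists 0%N; lia.
exists A; split.
  by move=> j; apply/fset0Pn; exists 0; rewrite /A inE.
have hU : union_fam A = [fset (0 : G)]%fset.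
  apply/fsetP => x; apply/bigfcupP/idP => [[j _ //] | hx].
  by exists j0; rewrite ?mem_index_enum.
have hP : Pi l A = [fset (0 : G)]%fset.
  apply/fsetP => x; apply/memPi/idP => [[i [a [inj ok ->]]] | hx].
    rewrite inE big1 // => k _; by have := ok k; rewrite /A inE => /eqP.
  have hi : injective (widen_ord Hlm) by move=> p q e; apply: val_inj; move/(congr1 val): e.
  exists (widen_ord Hlm), (fun _ => 0); split => //; first by move=> k; rewrite /A inE.
  by move: hx; rewrite inE => /eqP ->; rewrite big1.
rewrite hP hU cardfs1 big_seq_fset1 /mu.
have -> : (\sum_(j < m) ((0%R : G) \in A j))%N = m.
  rewrite (eq_bigr (fun _ => 1%N)); last by move=> j _; rewrite /A inE eqxx.
  by rewrite big_const_ord iter_addn_0 mul1n.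
have -> : minn l m = l by apply/minn_idPl.
by rewrite subrr add0r.
Qed.
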